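(* Let $E$ be an ellipse with center $O$ and $\psi$ the elliptic inversion with respect to $E$. Let $P,T$ be distinct points different from $O$, let $P'=\psi(P)$, $T'=\psi(T)$, and let $w=w_P$, $u=w_T$. Then: (i) if $P,T,O$ are not collinear, $$P'T'=\frac{\sqrt{(w^2-u^2)\left(w^2(OT)^2-u^2(OP)^2\right)+w^2u^2(PT)^2}}{OP\cdot OT};$$ (ii) if $P,T,O$ are collinear, then $w=u$ and $$P'T'=\frac{w^2\,PT}{OP\cdot OT}.$$
   Context: Let $E$ be an ellipse in $\mathbb{R}^2$ with center $O$. For a point $P\neq O$, let $Q_P$ be the intersection point of the ray $\overrightarrow{OP}$ with $E$ and write $w_P=OQ_P$. The elliptic inversion is the map $\psi:\mathbb{R}^2\setminus\{O\}\to\mathbb{R}^2\setminus\{O\}$, $\psi(P)=P'$, where $P'$ is the unique point on the ray $\overrightarrow{OP}$ with $OP\cdot OP'=w_P^2$. $XY$ denotes the Euclidean distance between points $X$ and $Y$. *)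

(* Defs.v *)
From Stdlib Require Import Reals Lra.
Open Scope R_scope.

Definition point : Type := (R * R)%type.

Definition edist (X Y : point) : R :=
  sqrt ((fst X - fst Y) ^ 2 + (snd X - snd Y) ^ 2).

(* An ellipse with center O: the set of X with
   A x^2 + 2 B x y + C y^2 = 1, where (x,y) = X - O, and the quadratic form
   is positive definite (A > 0, A C - B^2 > 0).  Every ellipse in R^2
   (arbitrary orientation, circles included) with center O has this form. *)
Definition is_ellipse_form (A B C : R) : Prop := 0 < A /\ 0 < A * C - B ^ 2.

Definition on_ellipse (A B C : R) (O X : point) : Prop :=
  let x := fst X - fst O in
  let y := snd X - snd O in
  A * x ^ 2 + 2 * B * x * y + C * y ^ 2 = 1.

Definition on_ray (O P X : point) : Prop :=
  exists t : R, 0 <= t /\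
    fst X = fst O + t * (fst P - fst O) /\
    snd X = snd O + t * (snd P - snd O).

Definition collinear (O P T : point) : Prop :=
  (fst P - fst O) * (snd T - snd O) - (snd P - snd O) * (fst T - fst O) = 0.

(* Main.v *)
Require Import Defs.
From Stdlib Require Import Reals Lra Psatz.
Open Scope R_scope.

Lemma sqrt_eq_l (x y : R) : 0 <= y -> x = y ^ 2 -> sqrt x = y.
Proof. intros Hy ->. apply sqrt_pow2; exact Hy. Qed.

Lemma sq_pos_of_ne (p1 p2 o1 o2 : R) : (p1, p2) <> (o1, o2) ->
  0 < (o1 - p1) ^ 2 + (o2 - p2) ^ 2.
Proof.
  intros H. destruct (Req_dec p1 o1) as [e1|e1]; destruct (Req_dec p2 o2) as [e2|e2].
  - subst; exfalso; apply H; reflexivity.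
  - assert (0 < (o2 - p2)^2) by (apply pow2_gt_0 || (apply pow_lt; lra) || nra). 
    assert (0 <= (o1 - p1)^2) by apply pow2_ge_0. lra.
  - assert (o1 - p1 <> 0) by lra. assert (0 < (o1 - p1)^2) by nra.
    assert (0 <= (o2 - p2)^2) by apply pow2_ge_0. lra.
  - assert (o1 - p1 <> 0) by lra. assert (0 < (o1 - p1)^2) by nra.
    assert (0 <= (o2 - p2)^2) by apply pow2_ge_0. lra.
Qed.

Theorem theorem1 (A B C : R) (O P T QP QT P' T' : point)
  (hE : is_ellipse_form A B C)
  (hPO : P <> O) (hTO : T <> O) (hPT : P <> T)
  (hQPray : on_ray O P QP) (hQPE : on_ellipse A B C O QP)
  (hQTray : on_ray O T QT) (hQTE : on_ellipse A B C O QT)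
  (hP'ray : on_ray O P P') (hP' : edist O P * edist O P' = (edist O QP) ^ 2)
  (hT'ray : on_ray O T T') (hT' : edist O T * edist O T' = (edist O QT) ^ 2) :
  let w := edist O QP in
  let u := edist O QT in
  (~ collinear O P T ->
     edist P' T' =
       sqrt ((w ^ 2 - u ^ 2) * (w ^ 2 * (edist O T) ^ 2 - u ^ 2 * (edist O P) ^ 2)
             + w ^ 2 * u ^ 2 * (edist P T) ^ 2)
       / (edist O P * edist O T)) /\
  (collinear O P T ->
     w = u /\ edist P' T' = w ^ 2 * edist P T / (edist O P * edist O T)).
Proof.
  destruct O as [o1 o2], P as [p1 p2], T as [q1 q2].
  destruct hQPray as [t [ht [e1 e2]]].
  destruct hQTray as [t' [ht' [e3 e4]]].
  destruct hP'ray as [s [hs [e5 e6]]].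
  destruct hT'ray as [r [hr [e7 e8]]].
  destruct QP as [x1 x2], QT as [y1 y2], P' as [z1 z2], T' as [v1 v2].
  cbn [fst snd] in *. subst.
  unfold on_ellipse, collinear in *. unfold edist in *. cbn [fst snd] in *.
  cbv zeta.
  set (X := p1 - o1) in *. set (Y := p2 - o2) in *.
  set (U := q1 - o1) in *. set (V := q2 - o2) in *.
  pose proof (sq_pos_of_ne _ _ _ _ hPO) as Ha2.
  pose proof (sq_pos_of_ne _ _ _ _ hTO) as Hb2.
  set (a2 := (o1 - p1) ^ 2 + (o2 - p2) ^ 2) in *.
  set (b2 := (o1 - q1) ^ 2 + (o2 - q2) ^ 2) in *.
  assert (Ha2X : a2 = X^2 + Y^2) by (unfold a2, X, Y; ring).
  assert (Hb2U : b2 = U^2 + V^2) by (unfold b2, U, V; ring).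
  set (a := sqrt a2) in *. set (b := sqrt b2) in *.
  assert (Ha : 0 < a) by (apply sqrt_lt_R0; lra).
  assert (Hb : 0 < b) by (apply sqrt_lt_R0; lra).
  assert (Haa : a ^ 2 = a2) by (apply pow2_sqrt; lra).
  assert (Hbb : b ^ 2 = b2) by (apply pow2_sqrt; lra).
  assert (HOP' : sqrt ((o1 - (o1 + s * X)) ^ 2 + (o2 - (o2 + s * Y)) ^ 2) = s * a).
  { apply sqrt_eq_l; [nra|]. rewrite Rpow_mult_distr, Haa, Ha2X; ring. }
  assert (HOT' : sqrt ((o1 - (o1 + r * U)) ^ 2 + (o2 - (o2 + r * V)) ^ 2) = r * b).
  { apply sqrt_eq_l; [nra|]. rewrite Rpow_mult_distr, Hbb, Hb2U; ring. }
  rewrite HOP' in hP'. rewrite HOT' in hT'.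
  set (w := sqrt ((o1 - (o1 + t * X)) ^ 2 + (o2 - (o2 + t * Y)) ^ 2)) in *.
  set (u := sqrt ((o1 - (o1 + t' * U)) ^ 2 + (o2 - (o2 + t' * V)) ^ 2)) in *.
  assert (Hw0 : 0 <= w) by apply sqrt_pos.
  assert (Hu0 : 0 <= u) by apply sqrt_pos.
  assert (Hw2 : w ^ 2 = s * a2) by (rewrite <- hP', <- Haa; ring).
  assert (Hu2 : u ^ 2 = r * b2) by (rewrite <- hT', <- Hbb; ring).
  set (d2 := (p1 - q1) ^ 2 + (p2 - q2) ^ 2) in *.
  assert (Hd0 : 0 <= d2) by (unfold d2; pose proof (pow2_ge_0 (p1-q1)); pose proof (pow2_ge_0 (p2-q2)); lra).
  assert (Hdd : sqrt d2 ^ 2 = d2) by (apply pow2_sqrt; lra).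
  set (e2 := (o1 + s * X - (o1 + r * U)) ^ 2 + (o2 + s * Y - (o2 + r * V)) ^ 2).
  assert (He0 : 0 <= e2) by (unfold e2; pose proof (pow2_ge_0 (o1 + s * X - (o1 + r * U))); pose proof (pow2_ge_0 (o2 + s * Y - (o2 + r * V))); lra).
  assert (Key : (w ^ 2 - u ^ 2) * (w ^ 2 * b ^ 2 - u ^ 2 * a ^ 2) + w ^ 2 * u ^ 2 * sqrt d2 ^ 2
                = (a * b) ^ 2 * e2).
  { rewrite Rpow_mult_distr, Hw2, Hu2, Haa, Hbb, Hdd. rewrite Ha2X, Hb2U.
    unfold d2, e2, X, Y, U, V. ring. }
  split.
  - intros _. rewrite Key. rewrite sqrt_mult_alt by nra.
    rewrite sqrt_pow2 by nra. field. lra.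
  - intros Hcol.
    assert (HwU : w = u).
    { assert (Ht : (t ^ 2) * (A * X^2 + 2*B*X*Y + C*Y^2) = 1).
      { rewrite <- hQPE. unfold X, Y. ring. }
      assert (Ht' : (t' ^ 2) * (A * U^2 + 2*B*U*V + C*V^2) = 1).
      { rewrite <- hQTE. unfold U, V. ring. }
      assert (Hw2' : w ^ 2 = t ^ 2 * a2).
      { unfold w. rewrite pow2_sqrt by nra. rewrite Ha2X. unfold X, Y. ring. }
      assert (Hu2' : u ^ 2 = t' ^ 2 * b2).
      { unfold u. rewrite pow2_sqrt by nra. rewrite Hb2U. unfold U, V. ring. }
      assert (Hc : X * V - Y * U = 0) by (rewrite <- Hcol; unfold X, Y, U, V; ring).
      assert (Id : a2 * (A * U^2 + 2*B*U*V + C*V^2) - b2 * (A * X^2 + 2*B*X*Y + C*Y^2)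
                   = (X * V - Y * U) * ((C - A) * (X*V + Y*U) + 2*B*(X*U - Y*V))).
      { rewrite Ha2X, Hb2U. ring. }
      rewrite Hc, Rmult_0_l in Id.
      set (Qp := A * X^2 + 2*B*X*Y + C*Y^2) in *.
      set (Qq := A * U^2 + 2*B*U*V + C*V^2) in *.
      assert (HQp : Qp <> 0) by (intro H; rewrite H in Ht; lra).
      assert (HQq : Qq <> 0) by (intro H; rewrite H in Ht'; lra).
      assert (E : w ^ 2 * (Qp * Qq) = u ^ 2 * (Qp * Qq)).
      { rewrite Hw2', Hu2'.
        replace (t ^ 2 * a2 * (Qp * Qq)) with ((t^2 * Qp) * (a2 * Qq)) by ring.
        replace (t' ^ 2 * b2 * (Qp * Qq)) with ((t'^2 * Qq) * (b2 * Qp)) by ring.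
        rewrite Ht, Ht'. lra. }
      assert (E2 : w ^ 2 = u ^ 2).
      { apply Rmult_eq_reg_r with (Qp * Qq); [exact E|]. apply Rmult_integral_contrapositive; auto. }
      nra. }
    split; [exact HwU|].
    apply sqrt_eq_l.
    + apply Rmult_le_pos; [apply Rmult_le_pos; [nra|apply sqrt_pos]|].
      apply Rlt_le, Rinv_0_lt_compat; nra.
    + rewrite <- HwU in Key.
      assert (Hab : (a*b)^2 <> 0) by (apply pow_nonzero; nra).
      apply Rmult_eq_reg_l with ((a*b)^2); [|exact Hab].
      rewrite <- Key. field. nra.
Qed.
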